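(* Let $\mathcal{H}$ be an infinite dimensional complex Hilbert space and let $\phi:\mathcal{B}(\mathcal{H})\to\mathcal{B}(\mathcal{H})$ be a bijective map preserving the Douglas solution in both directions. Then for every $B\in\mathcal{B}(\mathcal{H})$: $\operatorname{ran}B=\mathcal{H}$ if and only if $\operatorname{ran}\phi(B)=\mathcal{H}$.
   Context: $\mathcal{B}(\mathcal{H})$ denotes the algebra of all bounded linear operators on $\mathcal{H}$. For $A,B\in\mathcal{B}(\mathcal{H})$ with $\operatorname{ran}A\subseteq\operatorname{ran}B$, the Douglas solution of $A=BX$ is the unique $D\in\mathcal{B}(\mathcal{H})$ with $BD=A$ and $\operatorname{ran}D\subseteq(\ker B)^\perp$. A map $\phi:\mathcal{B}(\mathcal{H})\to\mathcal{B}(\mathcal{H})$ preserves the Douglas solution in both directions if for all $A,B,X\in\mathcal{B}(\mathcal{H})$: $X$ is the Douglas solution of $A=BX$ if and only if $\phi(X)$ is the Douglas solution of $\phi(A)=\phi(B)Y$. *)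

(* Defs.v *)
From HB Require Import structures.
From mathcomp Require Import all_boot all_order all_algebra.
From mathcomp Require Import reals.
From mathcomp Require Import complex.
Set Implicit Arguments. Unset Strict Implicit. Unset Printing Implicit Defensive.
Import Order.TTheory GRing.Theory Num.Theory.
Local Open Scope ring_scope.
Local Open Scope complex_scope.

Definition is_inner_product (R : realType) (H : lmodType R[i])
  (ip : H -> H -> R[i]) : Prop :=
  [/\ forall (a : R[i]) (x y z : H), ip (a *: x + y) z = a * ip x z + ip y z,
      forall x y : H, ip y x = (ip x y)^*,
      forall x : H, 0 <= ip x x
    & forall x : H, ip x x = 0 -> x = 0].

Definition nrm2 (R : realType) (H : lmodType R[i]) (ip : H -> H -> R[i])
  (x : H) : R[i] := ip x x.

Definition ip_complete (R : realType) (H : lmodType R[i])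
  (ip : H -> H -> R[i]) : Prop :=
  forall u : nat -> H,
    (forall e : R, 0 < e -> exists N : nat, forall m n : nat,
        (N <= m)%N -> (N <= n)%N -> nrm2 ip (u m - u n) < e%:C) ->
    exists l : H, forall e : R, 0 < e -> exists N : nat, forall n : nat,
        (N <= n)%N -> nrm2 ip (u n - l) < e%:C.

Definition is_Hilbert (R : realType) (H : lmodType R[i])
  (ip : H -> H -> R[i]) : Prop :=
  is_inner_product ip /\ ip_complete ip.

Definition infinite_dim (R : realType) (H : lmodType R[i]) : Prop :=
  forall n : nat, exists v : 'I_n -> H,
    forall c : 'I_n -> R[i], \sum_(i < n) c i *: v i = 0 -> forall i, c i = 0.

Definition is_bounded_op (R : realType) (H : lmodType R[i])
  (ip : H -> H -> R[i]) (f : H -> H) : Prop :=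
  linear f /\
  exists M : R, forall x : H, nrm2 ip (f x) <= M%:C * nrm2 ip x.

Record bop (R : realType) (H : lmodType R[i]) (ip : H -> H -> R[i]) := Bop {
  bop_fun :> H -> H;
  bop_bounded : is_bounded_op ip bop_fun }.

(* X is the Douglas solution of A = B X :
   B X = A and ran X is contained in (ker B)^perp. *)
Definition douglas_solution (R : realType) (H : lmodType R[i])
  (ip : H -> H -> R[i]) (A B X : bop ip) : Prop :=
  (forall x : H, B (X x) = A x) /\
  (forall x y : H, B y = 0 -> ip (X x) y = 0).

Definition full_range (R : realType) (H : lmodType R[i])
  (ip : H -> H -> R[i]) (T : bop ip) : Prop :=
  forall y : H, exists x : H, T x = y.

(* Main.v *)
Require Import Defs.
From HB Require Import structures.
From mathcomp Require Import all_boot all_order all_algebra.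
From mathcomp Require Import classical_sets reals complex.
From mathcomp Require Import ring lra.
From Stdlib Require Import Classical ClassicalEpsilon.
Set Implicit Arguments. Unset Strict Implicit. Unset Printing Implicit Defensive.
Import Order.TTheory GRing.Theory Num.Theory.
Local Open Scope ring_scope.
Local Open Scope complex_scope.

Notation cRe := complex.Re.
Notation cIm := complex.Im.

Section Cplx.
Variable R : realType.
Lemma ReD (z w : R[i]) : cRe (z + w) = cRe z + cRe w.
Proof. by case: z => a b; case: w => c d. Qed.
Lemma ReN (z : R[i]) : cRe (- z) = - cRe z.
Proof. by case: z => a b. Qed.
Lemma ReMr (r : R) (z : R[i]) : cRe (r%:C * z) = r * cRe z.
Proof. case: z => a b /=; ring. Qed.
Lemma ReJ (z : R[i]) : cRe (z^*) = cRe z.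
Proof. by case: z => a b. Qed.
Lemma ReNi (z : R[i]) : cRe ((- 'i) * z) = cIm z.
Proof. case: z => a b /=; ring. Qed.
Lemma conji : ('i : R[i])^* = - 'i.
Proof. by apply/eqP; rewrite eq_complex /= oppr0 !eqxx. Qed.
Lemma cplx_eq0 (z : R[i]) : cRe z = 0 -> cIm z = 0 -> z = 0.
Proof. by case: z => a b /= -> ->. Qed.
Lemma ge0_real (z : R[i]) : 0 <= z -> z = (cRe z)%:C.
Proof. rewrite lecE => /andP [/eqP h _]; case: z h => a b /= ->. by []. Qed.
End Cplx.

Section IP.
Variable R : realType.
Variable H : lmodType R[i].
Variable ip : H -> H -> R[i].
Hypothesis hip : is_inner_product ip.

Lemma ipDZ a x y z : ip (a *: x + y) z = a * ip x z + ip y z.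
Proof. by case: hip. Qed.
Lemma ipC x y : ip y x = (ip x y)^*.
Proof. by case: hip. Qed.
Lemma ipge0 x : 0 <= ip x x.
Proof. by case: hip. Qed.
Lemma ipxx0 x : ip x x = 0 -> x = 0.
Proof. by case: hip => _ _ _; apply. Qed.

Lemma ip0l z : ip 0 z = 0.
Proof.
have h := ipDZ 1 0 0 z; rewrite scale1r addr0 mul1r in h.
by apply/(addrI (ip 0 z)); rewrite addr0 -h.
Qed.
Lemma ipDl x y z : ip (x + y) z = ip x z + ip y z.
Proof. by have := ipDZ 1 x y z; rewrite scale1r mul1r. Qed.
Lemma ipZl a x z : ip (a *: x) z = a * ip x z.
Proof. by have := ipDZ a x 0 z; rewrite !addr0 ip0l addr0. Qed.
Lemma ipNl x z : ip (- x) z = - ip x z.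
Proof. by rewrite -scaleN1r ipZl mulN1r. Qed.
Lemma ipBl x y z : ip (x - y) z = ip x z - ip y z.
Proof. by rewrite ipDl ipNl. Qed.
Lemma ip0r z : ip z 0 = 0.
Proof. by rewrite ipC ip0l conjc0. Qed.
Lemma ipDr z x y : ip z (x + y) = ip z x + ip z y.
Proof. rewrite (ipC (x+y) z) (ipC x z) (ipC y z) ipDl; exact: raddfD. Qed.
Lemma ipZr z a x : ip z (a *: x) = a^* * ip z x.
Proof. rewrite (ipC x z) (ipC (a *: x) z) ipZl; exact: rmorphM. Qed.
Lemma ipNr z x : ip z (- x) = - ip z x.
Proof. rewrite (ipC x z) (ipC (- x) z) ipNl; exact: raddfN. Qed.
Lemma ipBr z x y : ip z (x - y) = ip z x - ip z y.
Proof. by rewrite ipDr ipNr. Qed.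

Definition q x := cRe (ip x x).
Lemma ipxx x : ip x x = (q x)%:C.
Proof. exact: ge0_real (ipge0 x). Qed.
Lemma q_ge0 x : 0 <= q x.
Proof. by have := ipge0 x; rewrite lecE => /andP[_]. Qed.
Lemma q_eq0 x : q x = 0 -> x = 0.
Proof. by move=> h; apply: ipxx0; rewrite ipxx h. Qed.
Lemma q0 : q 0 = 0.
Proof. by rewrite /q ip0l. Qed.
Lemma ReipC x y : cRe (ip y x) = cRe (ip x y).
Proof. by rewrite ipC ReJ. Qed.
Lemma ReipZl (r : R) x y : cRe (ip (r%:C *: x) y) = r * cRe (ip x y).
Proof. by rewrite ipZl ReMr. Qed.
Lemma ReipZr (r : R) x y : cRe (ip x (r%:C *: y)) = r * cRe (ip x y).
Proof. rewrite ipZr; case: (ip x y) => a b /=; ring. Qed.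
Lemma ReipNr x y : cRe (ip x (- y)) = - cRe (ip x y).
Proof. by rewrite ipNr ReN. Qed.
Lemma Reipi x y : cRe (ip x ('i *: y)) = cIm (ip x y).
Proof. rewrite ipZr; case: (ip x y) => a b /=; ring. Qed.
Lemma qD x y : q (x + y) = q x + q y + 2 * cRe (ip x y).
Proof.
rewrite /q ipDl !ipDr !ReD (ReipC y x); ring.
Qed.
Lemma qN x : q (- x) = q x.
Proof. by rewrite /q ipNl ipNr opprK. Qed.
Lemma qZ (r : R) x : q (r%:C *: x) = r ^+ 2 * q x.
Proof. by rewrite /q ReipZl ReipZr mulrA expr2. Qed.
Lemma qB x y : q (x - y) = q x + q y - 2 * cRe (ip x y).
Proof. by rewrite qD qN ReipNr; ring. Qed.
Lemma q_orth x y : ip x y = 0 -> q (x + y) = q x + q y.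
Proof. by move=> h; rewrite qD h /=; ring. Qed.

Lemma CS x y : cRe (ip x y) ^+ 2 <= q x * q y.
Proof.
have [->|yn0] := eqVneq y 0; first by rewrite ip0r q0 /= mulr0 expr0n.
have qy : 0 < q y by rewrite lt_def q_ge0 andbT; apply/eqP => /q_eq0; apply/eqP.
set a := cRe (ip x y).
have h := q_ge0 (x + (- a / q y)%:C *: y).
rewrite qD qZ ReipZr -/a in h.
have e : q y * (q x + (- a / q y) ^+ 2 * q y + 2 * ((- a / q y) * a)) = q y * q x - a ^+ 2.
  by field; rewrite gt_eqF.
have := mulr_ge0 (ltW qy) h; rewrite e; lra.
Qed.

Definition nm x := Num.sqrt (q x).
Lemma nm_ge0 x : 0 <= nm x. Proof. exact: sqrtr_ge0. Qed.
Lemma nm_sq x : nm x ^+ 2 = q x. Proof. exact: sqr_sqrtr (q_ge0 x). Qed.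
Lemma nm0 : nm 0 = 0. Proof. by rewrite /nm q0 sqrtr0. Qed.
Lemma nm_eq0 x : nm x = 0 -> x = 0.
Proof. by move=> h; apply: q_eq0; rewrite -nm_sq h expr0n. Qed.
Lemma nmN x : nm (- x) = nm x. Proof. by rewrite /nm qN. Qed.
Lemma nmZ (r : R) x : nm (r%:C *: x) = `|r| * nm x.
Proof. by rewrite /nm qZ sqrtrM ?sqr_ge0 // sqrtr_sqr. Qed.
Lemma CSabs x y : `|cRe (ip x y)| <= nm x * nm y.
Proof.
rewrite -sqrtr_sqr /nm -sqrtrM ?q_ge0 // ler_sqrt ?mulr_ge0 ?q_ge0 //; exact: CS.
Qed.
Lemma nmD x y : nm (x + y) <= nm x + nm y.
Proof.
have h1 := CSabs x y; have h2 := ler_norm (cRe (ip x y)).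
have h3 : q (x + y) <= (nm x + nm y) ^+ 2.
  rewrite qD -(nm_sq x) -(nm_sq y); nra.
rewrite /nm -(ler_sqrt _ (sqr_ge0 _)) sqrtr_sqr in h3.
by apply: (le_trans h3); rewrite ger0_norm // addr_ge0 ?nm_ge0.
Qed.
Lemma nmB x y : nm (x - y) = nm (y - x).
Proof. by rewrite -nmN opprB. Qed.
Lemma nm_tri x y z : nm (x - z) <= nm (x - y) + nm (y - z).
Proof. by have := nmD (x - y) (y - z); rewrite addrA subrK. Qed.
Lemma nm_lt_q x e : 0 < e -> (nm x < e) = (q x < e ^+ 2).
Proof.
move=> e0; have := ltr_sqrt (q x) (exprn_gt0 2 e0); rewrite sqrtr_sqr gtr0_norm //.
Qed.

Hypothesis hcomp : ip_complete ip.

Lemma complete_nm (u : nat -> H) :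
  (forall e : R, 0 < e -> exists N : nat, forall m n : nat,
        (N <= m)%N -> (N <= n)%N -> nm (u m - u n) < e) ->
  exists l : H, forall e : R, 0 < e -> exists N : nat, forall n : nat,
        (N <= n)%N -> nm (u n - l) < e.
Proof.
move=> hc; have [l hl] : exists l : H, forall e : R, 0 < e -> exists N : nat,
    forall n : nat, (N <= n)%N -> nrm2 ip (u n - l) < e%:C.
  apply: hcomp => e e0.
  have [N hN] := hc (Num.sqrt e) (eq_ind_r is_true e0 (sqrtr_gt0 e)).
  exists N => m n hm hn; have := hN m n hm hn.
  by rewrite nm_lt_q ?sqrtr_gt0 // sqr_sqrtr ?ltW // /nrm2 ipxx ltcR.
exists l => e e0; have [N hN] := hl (e ^+ 2) (exprn_gt0 2 e0).
by exists N => n hn; have := hN n hn; rewrite nm_lt_q // /nrm2 ipxx ltcR.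
Qed.

Lemma small_inv (e : R) : 0 < e -> exists N : nat, (N.+1%:R)^-1 < e.
Proof.
move=> e0; exists (Num.bound (e^-1)).
have ei : 0 < e^-1 by rewrite invr_gt0.
have h := archi_boundP (ltW ei).
have h2 : e^-1 < (Num.bound e^-1).+1%:R.
  by apply: (lt_trans h); rewrite ltr_nat.
rewrite -[X in _ < X]invrK ltf_pV2 // ?posrE ?ltr0Sn ?invr_gt0 //.
Qed.

Lemma nm_le0 (v : H) : (forall e : R, 0 < e -> nm v <= e) -> v = 0.
Proof.
move=> h; apply: nm_eq0; apply/le_anti; rewrite nm_ge0 andbT.
by apply/ler_addgt0Pr => e e0; rewrite add0r; apply: h.
Qed.

Lemma cauchy_lim (u : nat -> H) (a : nat -> R) :
  (forall k, nm (u k.+1 - u k) <= a k - a k.+1) ->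
  (forall k, 0 <= a k) ->
  (forall e, 0 < e -> exists N, a N < e) ->
  exists l, forall k, nm (l - u k) <= a k.
Proof.
move=> hstep hpos hsmall.
have hmk : forall m k, nm (u (m + k)%N - u k) <= a k - a (m + k)%N.
  move=> m k; elim: m => [|m IH]; first by rewrite add0n subrr nm0 subrr.
  rewrite addSn; apply: (le_trans (nm_tri _ (u (m + k)%N) _)).
  have := hstep (m + k)%N; lra.
have hmono : forall m k, a (m + k)%N <= a k.
  by move=> m k; have := hmk m k; have := nm_ge0 (u (m + k)%N - u k); lra.
have hge : forall m k, (k <= m)%N -> nm (u m - u k) <= a k.
  move=> m k hkm; rewrite -(subnK hkm); have := hmk (m - k)%N k.
  have := hpos ((m - k) + k)%N; lra.
have hc : forall e : R, 0 < e -> exists N : nat, forall m n : nat,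
        (N <= m)%N -> (N <= n)%N -> nm (u m - u n) < e.
  move=> e e0; have [N hN] := hsmall (e / 2) (divr_gt0 e0 (ltr0n _ 2)).
  exists N => m n hm hn; apply: (le_lt_trans (nm_tri _ (u N) _)).
  rewrite (nmB (u N)); have := hge m N hm; have := hge n N hn; lra.
have [l hl] := complete_nm hc.
exists l => k; apply/ler_addgt0Pr => e e0.
have [N hN] := hl e e0.
have hn := hN (maxn N k) (leq_maxl _ _).
have hk := hge (maxn N k) k (leq_maxr _ _).
apply: (le_trans (nm_tri _ (u (maxn N k)) _)).
by rewrite nmB; lra.
Qed.

Lemma bopL (T : bop ip) a u v : T (a *: u + v) = a *: T u + T v.
Proof. by case: (bop_bounded T) => hl _; apply: hl. Qed.
Lemma bop0 (T : bop ip) : T 0 = 0.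
Proof.
have := bopL T 1 0 0; rewrite !scale1r !addr0 => h.
by apply/(addrI (T 0)); rewrite addr0 -h.
Qed.
Lemma bopD (T : bop ip) u v : T (u + v) = T u + T v.
Proof. by have := bopL T 1 u v; rewrite !scale1r. Qed.
Lemma bopZ (T : bop ip) a u : T (a *: u) = a *: T u.
Proof. by rewrite -(addr0 (a *: u)) bopL bop0 addr0. Qed.
Lemma bopN (T : bop ip) u : T (- u) = - T u.
Proof. by rewrite -scaleN1r bopZ scaleN1r. Qed.
Lemma bopB (T : bop ip) u v : T (u - v) = T u - T v.
Proof. by rewrite bopD bopN. Qed.
Lemma bop_bound (T : bop ip) : exists K, 0 <= K /\ forall x, nm (T x) <= K * nm x.
Proof.
case: (bop_bounded T) => _ [M hM].
exists (Num.sqrt `|M|); split; first exact: sqrtr_ge0.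
move=> x; have := hM x; rewrite /nrm2 !ipxx lecE => /andP[_]; rewrite ReMr /= => h.
rewrite /nm -sqrtrM ?normr_ge0 // ler_sqrt ?mulr_ge0 ?normr_ge0 ?q_ge0 //.
apply: (le_trans h); apply: ler_wpM2r; [exact: q_ge0 | exact: ler_norm].
Qed.

Definition Eset (B : bop ip) (n : nat) (y : H) :=
  forall e : R, 0 < e -> exists x, nm x <= n%:R /\ nm (B x - y) < e.

Lemma baire (B : bop ip) : (forall y, exists x, B x = y) ->
  exists n : nat, exists y0 : H, exists r : R,
    0 < r /\ forall y, nm (y - y0) < r -> Eset B n y.
Proof.
move=> hsurj; apply: NNPP => hn.
have hA : forall n z r, 0 < r -> exists y, nm (y - z) < r /\ ~ Eset B n y.
  move=> n z r r0; apply: NNPP => hne; apply: hn; exists n, z, r; split => // y hy.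
  by apply: NNPP => hEy; apply: hne; exists y.
have hB : forall n y, ~ Eset B n y ->
    exists e, 0 < e /\ forall x, nm x <= n%:R -> e <= nm (B x - y).
  move=> n y hE; apply: NNPP => hne; apply: hE => e e0; apply: NNPP => hx.
  apply: hne; exists e; split => // x hxn; rewrite leNgt; apply/negP => hlt.
  by apply: hx; exists x.
pose P n (z : H) (r : R) (p : H * R) := 0 < r ->
  [/\ 0 < p.2, nm (p.1 - z) + p.2 <= r, p.2 <= (n.+1%:R)^-1 &
      forall u, nm (u - p.1) <= p.2 -> forall x, nm x <= n%:R -> p.2 <= nm (B x - u)].
have step : forall n z r, exists p, P n z r p.
  move=> n z r; case: (boolP (0 < r)) => r0; last by exists (0, 0) => h; rewrite h in r0.
  have [y [hy hE]] := hA n z (r / 2) (divr_gt0 r0 (ltr0n _ 2)).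
  have [e [e0 he]] := hB n y hE.
  pose s := Num.min (e / 2) (Num.min (r / 4) (n.+1%:R)^-1).
  have s1 : s <= e / 2 by rewrite ge_min lexx.
  have s2 : s <= r / 4 by rewrite !ge_min lexx /= ?orbT.
  have s3 : s <= (n.+1%:R)^-1 by rewrite !ge_min lexx /= ?orbT.
  have s0 : 0 < s.
    by rewrite !lt_min divr_gt0 ?ltr0n // divr_gt0 ?ltr0n // invr_gt0 ltr0n.
  clearbody s; exists (y, s) => _ /=; split => //.
    have L : forall a s r : R, a < r / 2 -> s <= r / 4 -> 0 < r -> a + s <= r.
      by move=> *; lra.
    exact: L hy s2 r0.
  move=> u hu x hx; have h1 := he x hx; have h2 := nm_tri (B x) u y.
  have L : forall a b c s e : R, e <= a -> a <= b + c -> c <= s -> s <= e / 2 -> s <= b.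
    by move=> *; lra.
  exact: L h1 h2 hu s1.
pose f n z r := proj1_sig (constructive_indefinite_description _ (step n z r)).
have hf : forall n z r, P n z r (f n z r).
  by move=> n z r; exact: (proj2_sig (constructive_indefinite_description _ (step n z r))).
pose sq := fix sq (k : nat) : H * R :=
  match k with 0%N => (0, 1) | k'.+1 => f k' (sq k').1 (sq k').2 end.
have sqS : forall k, sq k.+1 = f k (sq k).1 (sq k).2 by [].
have pos : forall k, 0 < (sq k).2.
  elim=> [|k IH]; first by rewrite /= ltr01.
  by rewrite sqS; case: (hf k (sq k).1 (sq k).2 IH).
have c1 : forall k, nm ((sq k.+1).1 - (sq k).1) <= (sq k).2 - (sq k.+1).2.
  move=> k; rewrite sqS; case: (hf k (sq k).1 (sq k).2 (pos k)) => _ h _ _.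
  have L : forall a b c : R, a + b <= c -> a <= c - b by move=> *; lra.
  exact: L h.
have c2 : forall k, 0 <= (sq k).2 by move=> k; exact: ltW.
have c3 : forall e, 0 < e -> exists N, (sq N).2 < e.
  move=> e e0; have [N hN] := small_inv e0; exists N.+1.
  rewrite sqS; case: (hf N (sq N).1 (sq N).2 (pos N)) => _ _ h _; exact: le_lt_trans h hN.
have [l hl] := cauchy_lim c1 c2 c3.
have [x0 hx0] := hsurj l.
have hb := archi_boundP (nm_ge0 x0).
set k := Num.bound (nm x0) in hb.
have := pos k.+1; rewrite sqS; case: (hf k (sq k).1 (sq k).2 (pos k)) => _ _ _ h.
have := h l _ x0 (ltW hb); rewrite -sqS hx0 subrr nm0 => h2 h3.
by have := h2 (hl k.+1); lra.
Qed.

Lemma zid (V : zmodType) (a b c d : V) : a - b - c = a - (d + c) - (b - d).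
Proof. by rewrite opprB opprD !addrA (addrAC (a - d) (- c) d) subrK addrAC. Qed.
Lemma scaleCK (t : R) (v : H) : t != 0 -> (t^-1)%:C *: (t%:C *: v) = v.
Proof. move=> t0; by rewrite scalerA -rmorphM mulVf // rmorph1 scale1r. Qed.
Lemma nm_gt0 (y : H) : y != 0 -> 0 < nm y.
Proof.
move=> y0; rewrite lt_def nm_ge0 andbT; apply/eqP => h; move/eqP: y0; apply.
exact: nm_eq0.
Qed.
Lemma nmBsub (a b : H) : nm (a - b) <= nm a + nm b.
Proof. by have := nm_tri a 0 b; rewrite subr0 sub0r nmN. Qed.

Lemma approx (B : bop ip) : (forall y, exists x, B x = y) ->
  exists C : R, 0 <= C /\ forall y e, 0 < e ->
    exists x, nm x <= C * nm y /\ nm (B x - y) < e.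
Proof.
move=> hsurj; have [n [y0 [r [r0 hE]]]] := baire hsurj.
have hD : forall y, nm y < r -> forall e, 0 < e ->
    exists x, nm x <= 2 * n%:R /\ nm (B x - y) < e.
  move=> y hy e e0.
  have h1 : nm (y0 + y - y0) < r by rewrite (addrC y0) addrK.
  have h2 : nm (y0 - y0) < r by rewrite subrr nm0.
  have e2 : 0 < e / 2 by rewrite divr_gt0 ?ltr0n.
  have [x1 [hx1 hB1]] := hE _ h1 _ e2.
  have [x2 [hx2 hB2]] := hE _ h2 _ e2.
  exists (x1 - x2); split.
    have := nmBsub x1 x2.
    have L : forall a b c d : R, a <= b + c -> b <= d -> c <= d -> a <= 2 * d.
      by move=> *; lra.
    move=> h; exact: L h hx1 hx2.
  rewrite bopB (zid _ _ _ y0).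
  have := nmBsub (B x1 - (y0 + y)) (B x2 - y0).
  have L : forall a b c e : R, a <= b + c -> b < e / 2 -> c < e / 2 -> a < e.
    by move=> *; lra.
  move=> h; exact: L h hB1 hB2.
exists (4 * n%:R / r); split; first by rewrite divr_ge0 ?mulr_ge0 ?ler0n ?ltW.
move=> y e e0; have [->|yn0] := eqVneq y 0.
  by exists 0; rewrite nm0 mulr0 bop0 subr0 nm0 lexx.
have ny := nm_gt0 yn0.
set t := r / (2 * nm y).
have t0 : 0 < t by rewrite divr_gt0 // mulr_gt0 ?ltr0n.
have hy' : nm (t%:C *: y) < r.
  rewrite nmZ gtr0_norm // /t.
  have -> : r / (2 * nm y) * nm y = r / 2 by field; rewrite gt_eqF.
  have L : forall r : R, 0 < r -> r / 2 < r by move=> *; lra.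
  exact: L.
have [x' [hx' hB']] := hD _ hy' (t * e) (mulr_gt0 t0 e0).
exists ((t^-1)%:C *: x'); split.
  rewrite nmZ gtr0_norm ?invr_gt0 //.
  have -> : 4 * n%:R / r * nm y = t^-1 * (2 * n%:R).
    by rewrite /t invf_div; field; rewrite gt_eqF.
  by rewrite ler_wpM2l // ltW // invr_gt0.
rewrite bopZ -(scaleCK y (negbT (gt_eqF t0))) -scalerBr nmZ gtr0_norm ?invr_gt0 //.
rewrite -(ltr_pM2l t0) mulrA mulfV ?gt_eqF // mul1r.
by [].
Qed.

Lemma geo_small (c e : R) : 0 <= c -> 0 < e -> exists N : nat, c * (2^-1) ^+ N < e.
Proof.
move=> c0 e0; have c1 : 0 < c + 1 by lra.
have [N hN] := small_inv (divr_gt0 e0 c1); exists N.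
have hg : (2^-1 : R) ^+ N <= (N.+1%:R)^-1.
  rewrite exprVn -natrX lef_pV2 ?posrE ?ltr0n ?expn_gt0 // ler_nat.
  exact: ltn_expl.
have hg0 : 0 <= (2^-1 : R) ^+ N by rewrite exprn_ge0 // invr_ge0 ler0n.
have L : forall g i : R, 0 <= g -> g <= i -> i < e / (c + 1) -> c * g < e.
  move=> g i g0 gi ie; have : (c + 1) * i < e.
    have hh : (c + 1) * (e / (c + 1)) = e by rewrite mulrC divfK // (negbT (gt_eqF c1)).
    by rewrite -[X in _ < X]hh ltr_pM2l.
  by move=> h; nra.
exact: L hg0 hg hN.
Qed.

Lemma open_map (B : bop ip) : (forall y, exists x, B x = y) ->
  exists C : R, 0 <= C /\ forall y, exists x, B x = y /\ nm x <= C * nm y.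
Proof.
move=> hsurj; have [C [C0 hC]] := approx hsurj.
have [K [K0 hK]] := bop_bound B.
exists (2 * C); split; first by rewrite mulr_ge0 ?ler0n.
move=> y; have [->|yn0] := eqVneq y 0.
  by exists 0; rewrite bop0 nm0 mulr0 lexx.
have ny := nm_gt0 yn0.
pose g (k : nat) : R := (2^-1) ^+ k.
have g0 : forall k, 0 < g k by move=> k; rewrite exprn_gt0 // invr_gt0 ltr0n.
have gS : forall k, g k.+1 = g k / 2 by move=> k; rewrite /g exprSr.
have step : forall (k : nat) (Y : H), exists x,
    nm x <= C * nm Y /\ nm (B x - Y) < nm y * g k.+1.
  by move=> k Y; apply: hC; rewrite mulr_gt0.
pose h k Y := proj1_sig (constructive_indefinite_description _ (step k Y)).
have hh : forall k Y, nm (h k Y) <= C * nm Y /\ nm (B (h k Y) - Y) < nm y * g k.+1.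
  by move=> k Y; exact: (proj2_sig (constructive_indefinite_description _ (step k Y))).
pose sq := fix sq (k : nat) : H * H :=
  match k with 0%N => (0, y)
  | k'.+1 => ((sq k').1 + h k' (sq k').2, (sq k').2 - B (h k' (sq k').2)) end.
have sqS : forall k, sq k.+1 = ((sq k).1 + h k (sq k).2, (sq k).2 - B (h k (sq k).2)) by [].
have I1 : forall k, (sq k).2 = y - B (sq k).1.
  elim=> [|k IH]; first by rewrite /= bop0 subr0.
  by rewrite sqS /= IH bopD opprD addrA.
have I2 : forall k, nm (sq k).2 <= nm y * g k.
  elim=> [|k IH]; first by rewrite /= /g expr0 mulr1 lexx.
  rewrite sqS /= nmB; exact: ltW (hh k _).2.
pose a (k : nat) := 2 * C * nm y * g k.
have c1 : forall k, nm ((sq k.+1).1 - (sq k).1) <= a k - a k.+1.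
  move=> k; rewrite sqS /= (addrC (sq k).1) addrK /a gS.
  have L : forall u v w z c : R, 0 <= c -> u <= c * v -> v <= w * z ->
      u <= 2 * c * w * z - 2 * c * w * (z / 2).
    by move=> *; nra.
  exact: L C0 (hh k _).1 (I2 k).
have c2 : forall k, 0 <= a k.
  by move=> k; rewrite /a !mulr_ge0 ?ler0n ?nm_ge0 // ltW.
have c3 : forall e, 0 < e -> exists N, a N < e.
  move=> e e0; have [N hN] := geo_small (c := 2 * C * nm y) (mulr_ge0 (mulr_ge0 (ler0n _ 2) C0) (ltW ny)) e0.
  by exists N.
have [x hx] := cauchy_lim c1 c2 c3.
exists x; split.
  apply/eqP; rewrite -subr_eq0; apply/eqP; apply: nm_le0 => e e0.
  have cc : 0 <= (2 * C * K + 1) * nm y.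
    apply: mulr_ge0; last exact: ltW.
    by apply: addr_ge0; [rewrite !mulr_ge0 ?ler0n | exact: ler01].
  have [k hk] := geo_small cc e0.
  have -> : B x - y = B (x - (sq k).1) - (sq k).2.
    by rewrite I1 bopB opprB addrA subrK.
  apply: (le_trans (nmBsub _ _)).
  have h1 := hK (x - (sq k).1); have h2 := hx k; have h3 := I2 k.
  have L : forall (b c d f K C ny gk e : R), 0 <= K -> b <= K * c -> c <= 2 * C * ny * gk ->
      d <= ny * gk -> (2 * C * K + 1) * ny * gk < e -> b + d <= e.
    by move=> *; nra.
  exact: L K0 h1 h2 h3 hk.
have := hx 0%N; rewrite /= subr0 /a /g expr0 mulr1 => h0.
exact: h0.
Qed.

Lemma var0 (a qw : R) : 0 < qw -> (forall t : R, 0 <= t ^+ 2 * qw - 2 * t * a) -> a = 0.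
Proof.
move=> q0 h; have := h (a / qw).
have -> : (a / qw) ^+ 2 * qw - 2 * (a / qw) * a = - (a ^+ 2 / qw).
  by field; rewrite gt_eqF.
rewrite oppr_ge0 => h2.
have : a ^+ 2 <= 0.
  by have := mulr_le0_ge0 h2 (ltW q0); rewrite divfK // (negbT (gt_eqF q0)).
by move=> h3; apply/eqP; rewrite -sqrf_eq0 eq_le h3 sqr_ge0.
Qed.

Lemma eps_mono (m N : nat) : (N <= m)%N -> (m.+1%:R : R)^-1 <= (N.+1%:R)^-1.
Proof. by move=> h; rewrite lef_pV2 ?posrE ?ltr0Sn // ler_nat ltnS. Qed.

Lemma two_mid (v s : H) : 2%:C *: (v - (2^-1)%:C *: s) = v + v - s.
Proof.
rewrite scalerBr scalerA -rmorphM mulfV ?pnatr_eq0 // rmorph1 scale1r.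
by rewrite rmorph_nat scaler_nat mulr2n.
Qed.

Lemma proj (B : bop ip) (v : H) :
  exists k, B k = 0 /\ forall w, B w = 0 -> ip (v - k) w = 0.
Proof.
have [K [K0 hK]] := bop_bound B.
pose S : set R := fun t => exists k, B k = 0 /\ t = nm (v - k).
have Sne : nonempty S by exists (nm v); exists 0; rewrite bop0 subr0.
have Slb : lbound S 0 by move=> t [k [_ ->]]; exact: nm_ge0.
have hS : has_inf S by split => //; exists 0.
set D := inf S.
have D0 : 0 <= D by exact: lb_le_inf.
have hDle : forall k, B k = 0 -> D <= nm (v - k).
  move=> k hk; apply: (ge_inf (hS.2)); by exists k.
pose eps (n : nat) : R := (n.+1%:R)^-1.
have eps0 : forall n, 0 < eps n by move=> n; rewrite invr_gt0 ltr0Sn.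
have eps1 : forall n, eps n <= 1 by move=> n; rewrite /eps invf_le1 ?ltr0Sn // ler1n.
have step : forall n : nat, exists k, B k = 0 /\ nm (v - k) < D + eps n.
  move=> n; have [t [k [hk ->]] ht] := inf_adherent (eps0 n) hS.
  by exists k.
pose ks n := proj1_sig (constructive_indefinite_description _ (step n)).
have hks : forall n, B (ks n) = 0 /\ nm (v - ks n) < D + eps n.
  by move=> n; exact: (proj2_sig (constructive_indefinite_description _ (step n))).
have par : forall m n, q (ks n - ks m) <=
    2 * ((D + eps m) ^+ 2 - D ^+ 2) + 2 * ((D + eps n) ^+ 2 - D ^+ 2).
  move=> m n; set a := v - ks m; set b := v - ks n.
  have e1 : a - b = ks n - ks m by rewrite /a /b opprB addrC addrA subrK.
  pose mid := (2^-1)%:C *: (ks m + ks n).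
  have hmid : B mid = 0 by rewrite bopZ bopD (hks m).1 (hks n).1 addr0 scaler0.
  have e2 : a + b = 2%:C *: (v - mid) by rewrite two_mid opprD addrACA.
  have h1 := qB a b; have h2 := qD a b.
  rewrite e1 in h1; rewrite e2 qZ in h2.
  have ha : q a <= (D + eps m) ^+ 2.
    have h0 : 0 <= D + eps m by rewrite addr_ge0 // ltW.
    rewrite -nm_sq; apply: ltW; rewrite ltr_pXn2r ?nnegrE ?nm_ge0 //.
    exact: (hks m).2.
  have hb : q b <= (D + eps n) ^+ 2.
    have h0 : 0 <= D + eps n by rewrite addr_ge0 // ltW.
    rewrite -nm_sq; apply: ltW; rewrite ltr_pXn2r ?nnegrE ?nm_ge0 //.
    exact: (hks n).2.
  have hm : D ^+ 2 <= q (v - mid).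
    by rewrite -nm_sq ler_pXn2r ?nnegrE ?nm_ge0 //; apply: hDle.
  have L : forall x y z ha hb w da db d re : R,
      x = ha + hb - 2 * re -> y = ha + hb + 2 * re -> y = 2 ^+ 2 * w ->
      ha <= da -> hb <= db -> d <= w ->
      x <= 2 * (da - d) + 2 * (db - d).
    by move=> *; nra.
  exact: L h1 h2 (erefl _) ha hb hm.
have hc : forall e : R, 0 < e -> exists N : nat, forall m n : nat,
    (N <= m)%N -> (N <= n)%N -> nm (ks m - ks n) < e.
  move=> e e0.
  have c0 : 0 < 4 * (2 * D + 1).
    have L : forall D : R, 0 <= D -> 0 < 4 * (2 * D + 1) by move=> *; lra.
    exact: L D0.
  have [N hN] := small_inv (divr_gt0 (exprn_gt0 2 e0) c0).
  exists N => m n hm hn; rewrite nm_lt_q //.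
  apply: (le_lt_trans (par n m)).
  have hm' := eps_mono hm; have hn' := eps_mono hn.
  have L : forall D em en eN e2 c : R, 0 <= D -> 0 < em -> 0 < en -> em <= eN -> en <= eN ->
      eN <= 1 -> c = 4 * (2 * D + 1) -> 0 < c -> eN < e2 / c ->
      2 * ((D + en) ^+ 2 - D ^+ 2) + 2 * ((D + em) ^+ 2 - D ^+ 2) < e2.
    move=> D' em en eN e2 c hD hem hen h1 h2 h3 hc hc0 h4.
    have : eN * c < e2 by rewrite -ltr_pdivlMr.
    rewrite hc => h5; nra.
  exact: L D0 (eps0 m) (eps0 n) hm' hn' (eps1 N) (erefl _) c0 hN.
have [l hl] := complete_nm hc.
have hBl : B l = 0.
  apply: nm_le0 => e e0.
  have cK : 0 < K + 1.
    have L : forall K : R, 0 <= K -> 0 < K + 1 by move=> *; lra.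
    exact: L K0.
  have [N hN] := hl _ (divr_gt0 e0 cK).
  have h1 := hN N (leqnn N).
  have -> : B l = - B (ks N - l) by rewrite bopB (hks N).1 sub0r opprK.
  rewrite nmN; apply: (le_trans (hK _)).
  have L : forall K x e : R, 0 <= K -> 0 <= x -> 0 < e -> x < e / (K + 1) -> K * x <= e.
    move=> K' x e' hK' hx he hxe.
    have hz : 0 < K' + 1 by lra.
    have : x * (K' + 1) < e' by rewrite -(ltr_pdivlMr _ _ hz).
    nra.
  exact: L K0 (nm_ge0 _) e0 h1.
have hmin : nm (v - l) <= D.
  apply/ler_addgt0Pr => e e0.
  have e2 : 0 < e / 2 by rewrite divr_gt0 ?ltr0n.
  have [N1 hN1] := hl _ e2.
  have [N2 hN2] := small_inv e2.
  set n := maxn N1 N2.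
  have h1 := hN1 n (leq_maxl _ _).
  have h2 := le_lt_trans (eps_mono (leq_maxr N1 N2)) hN2.
  have h3 := (hks n).2.
  have h4 := nm_tri v (ks n) l.
  have L : forall a b c d en e : R, a <= b + c -> b < d + en -> c < e / 2 -> en < e / 2 ->
      a <= d + e.
    by move=> *; lra.
  exact: L h4 h3 h1 h2.
exists l; split => // w hw.
have hre : forall w, B w = 0 -> cRe (ip (v - l) w) = 0.
  move=> w' hw'; have [->|wn0] := eqVneq w' 0; first by rewrite ip0r.
  have qw : 0 < q w' by rewrite -nm_sq exprn_gt0 // nm_gt0.
  apply: (var0 qw) => t.
  have hk : B (l + t%:C *: w') = 0 by rewrite bopD bopZ hw' hBl scaler0 addr0.
  have h := le_trans hmin (hDle _ hk).
  rewrite opprD addrA in h.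
  have h' : q (v - l) <= q (v - l - t%:C *: w').
    by rewrite -!nm_sq ler_pXn2r ?nnegrE ?nm_ge0.
  rewrite (qB (v - l)) qZ ReipZr in h'.
  have L : forall Q Qw a t : R, Q <= Q + t ^+ 2 * Qw - 2 * (t * a) ->
      0 <= t ^+ 2 * Qw - 2 * t * a by move=> *; lra.
  exact: L h'.
apply: cplx_eq0; first exact: hre.
rewrite -Reipi; apply: hre; by rewrite bopZ hw scaler0.
Qed.

Lemma right_inv (B : bop ip) : (forall y, exists x, B x = y) ->
  exists X : bop ip, forall x, B (X x) = x /\ forall y, B y = 0 -> ip (X x) y = 0.
Proof.
move=> hsurj; have [C [C0 hC]] := open_map hsurj.
have hpre : forall y, exists u, [/\ B u = y, forall w, B w = 0 -> ip u w = 0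
    & nm u <= C * nm y].
  move=> y; have [x [hx hxn]] := hC y; have [k [hk hort]] := proj B x.
  exists (x - k); split; [by rewrite bopB hk subr0 | exact: hort | ].
  apply: le_trans hxn; rewrite /nm ler_sqrt ?q_ge0 //.
  have e : q x = q (x - k) + q k.
    by rewrite -(q_orth (hort k hk)) subrK.
  rewrite e; have := q_ge0 k.
  have L : forall a b : R, 0 <= b -> a <= a + b by move=> *; lra.
  exact: L.
pose Xf y := proj1_sig (constructive_indefinite_description _ (hpre y)).
have hX : forall y, [/\ B (Xf y) = y, forall w, B w = 0 -> ip (Xf y) w = 0
    & nm (Xf y) <= C * nm y].
  by move=> y; exact: (proj2_sig (constructive_indefinite_description _ (hpre y))).
have uniq : forall u1 u2, B u1 = B u2 -> (forall w, B w = 0 -> ip u1 w = 0) ->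
    (forall w, B w = 0 -> ip u2 w = 0) -> u1 = u2.
  move=> u1 u2 hB h1 h2; have hd : B (u1 - u2) = 0 by rewrite bopB hB subrr.
  apply/eqP; rewrite -subr_eq0; apply/eqP; apply: ipxx0.
  by rewrite ipBl h1 ?h2 ?subrr.
have hlin : forall a u v, Xf (a *: u + v) = a *: Xf u + Xf v.
  move=> a u v; apply: uniq.
  - by case: (hX (a *: u + v)) => -> _ _; rewrite bopL; case: (hX u) => -> _ _; case: (hX v) => -> _ _.
  - by case: (hX (a *: u + v)).
  - move=> w hw; rewrite ipDZ; case: (hX u) => _ -> // _; case: (hX v) => _ -> // _.
    by rewrite mulr0 addr0.
have hbd : forall y, nrm2 ip (Xf y) <= (C ^+ 2)%:C * nrm2 ip y.
  move=> y; rewrite /nrm2 !ipxx lecE; apply/andP; split.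
    by rewrite /= !mulr0 !mul0r addr0.
  rewrite ReMr /= -!nm_sq; case: (hX y) => _ _ h.
  have L : forall a b C : R, 0 <= a -> a <= C * b -> 0 <= C -> 0 <= b -> a ^+ 2 <= C ^+ 2 * b ^+ 2.
    by move=> *; nra.
  exact: L (nm_ge0 _) h C0 (nm_ge0 _).
have hb : is_bounded_op ip Xf by split; [exact: hlin | exists (C ^+ 2)].
exists (Bop hb) => x /=; by case: (hX x).
Qed.
End IP.

Theorem claim1 (R : realType) (H : lmodType R[i]) (ip : H -> H -> R[i])
  (hH : is_Hilbert ip) (hinf : infinite_dim H)
  (phi : bop ip -> bop ip) (hbij : bijective phi)
  (hpres : forall A B X : bop ip,
      douglas_solution A B X <-> douglas_solution (phi A) (phi B) (phi X)) :
  forall B : bop ip, full_range B <-> full_range (phi B).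
Proof.
move=> B; case: hH => hip hcomp; case: hbij => g gK Kg.
have hI : is_bounded_op ip (fun x : H => x).
  split; first by move=> a u v.
  by exists 1 => x; rewrite rmorph1 mul1r lexx.
pose I := Bop hI.
have hDS : forall A, douglas_solution A I A.
  by move=> A; split => // x y /= ->; rewrite ip0r.
have hphiI : forall x, phi I x = x.
  move=> x; have := (hpres (g I) I (g I)).1 (hDS (g I)); rewrite Kg.
  by case=> h _; exact: h x.
split.
- move=> hsurj; have [X hX] := right_inv hip hcomp hsurj.
  have hd : douglas_solution I B X.
    by split => x; [exact: (hX x).1 | exact: (hX x).2].
  have [h1 _] := (hpres I B X).1 hd.
  by move=> y; exists (phi X y); rewrite h1 hphiI.
- move=> hsurj; have [X hX] := right_inv hip hcomp hsurj.
  have hd : douglas_solution (phi I) (phi B) (phi (g X)).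
    by rewrite Kg; split => x; [rewrite hphiI; exact: (hX x).1 | exact: (hX x).2].
  have [h1 _] := (hpres I B (g X)).2 hd.
  by move=> y; exists (g X y); rewrite h1.
Qed.
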